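(* Let $\mathcal{D}$ be a symmetric $2$-$(56,11,2)$ design (biplane) with point set $\{1,\dots,56\}$ and let $B=\{46,\dots,56\}$ be a block of $\mathcal{D}$. Let $A$ be the $56\times 56$ points-by-blocks incidence matrix of $\mathcal{D}$ with columns ordered so that the last column corresponds to $B$, so that $$A=\begin{pmatrix} A'' & \bar 0_{45}\\ A' & \bar 1_{11}\end{pmatrix},$$ where $A''$ is the $45\times 55$ incidence matrix of the residual design $\mathcal{D}_B$ (a $2$-$(45,9,2)$ design on points $1,\dots,45$) and $A'$ is the $11\times 55$ incidence matrix of the derived design $\mathcal{D}^B$. Let $L''$ and $L$ be the linear codes over $GF(3)$ spanned by the rows of $A''$ and of $A$ respectively. If $c=(c_1,\dots,c_{55})\in\{0,1\}^{55}$ has Hamming weight $12$ and lies in $(L'')^\perp$, then $c^*=(c_1,\dots,c_{55},0)$ lies in $L^\perp$.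
   Context: A symmetric $2$-$(v,k,\lambda)$ design has $v$ points and $v$ blocks of size $k$, every pair of points in exactly $\lambda$ blocks; a biplane is one with $\lambda=2$. For a block $B$ of a design $(X,\mathcal{B})$, the residual design $\mathcal{D}_B$ has point set $X\setminus B$ and blocks $B_j\setminus B$ for $B_j\in\mathcal{B}$, $B_j\neq B$; the derived design $\mathcal{D}^B$ has point set $B$ and blocks $B\cap B_j$ for $B_j\neq B$. Duals of codes are taken with respect to the standard inner product over $GF(3)$. *)

(* Defs.v *)
From HB Require Import structures.
From mathcomp Require Import all_boot all_order all_algebra.
Set Implicit Arguments. Unset Strict Implicit. Unset Printing Implicit Defensive.
Import GRing.Theory.
Local Open Scope ring_scope.

(* An incidence structure on points 'I_v and blocks 'I_v is given by
   inc : 'I_v -> 'I_v -> bool, inc p b = (point p lies in block b). *)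

Definition symmetric_design (v k lam : nat) (inc : 'I_v -> 'I_v -> bool) : Prop :=
  (forall b : 'I_v, #|[set p : 'I_v | inc p b]| = k) /\
  (forall p q : 'I_v, p != q -> #|[set b : 'I_v | inc p b && inc q b]| = lam).

Definition incmx (v : nat) (inc : 'I_v -> 'I_v -> bool) : 'M['F_3]_v :=
  \matrix_(i, j) (inc i j)%:R.

Definition in_dual_code (m n : nat) (G : 'M['F_3]_(m, n)) (x : 'rV['F_3]_n) : Prop :=
  forall u : 'rV['F_3]_n, (u <= G)%MS -> u *m x^T = 0.

Definition hweight (n : nat) (x : 'rV['F_3]_n) : nat := #|[set j : 'I_n | x 0 j != 0]|.

(* Main.v *)
Require Import Defs.
From HB Require Import structures.
From mathcomp Require Import all_boot all_order all_algebra.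
From mathcomp Require Import ring zify.
Import GRing.Theory Num.Theory.
Local Open Scope ring_scope.

Lemma sumb (R : pzSemiRingType) (T : finType) (P : pred T) :
  \sum_(x : T) ((P x)%:R : R) = (#|[set x | P x]|)%:R.
Proof.
rewrite -natr_sum -sum1_card [in RHS]big_mkcond /=; congr (_%:R).
by apply: eq_bigr => x _; rewrite inE; case: (P x).
Qed.

Lemma dual (inc : 'I_56 -> 'I_56 -> bool) (hD : symmetric_design 11 2 inc)
  (e f : 'I_56) : e != f -> #|[set p | inc p e && inc p f]| = 2%N.
Proof.
move=> ef; case: hD => hk hl.
pose N : 'M[rat]_56 := \matrix_(i,j) (inc i j)%:R.
pose J : 'M[rat]_56 := const_mx 1.
have JN : J *m N = 11%:R *: J.
  apply/matrixP => i j; rewrite !mxE.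
  under eq_bigr do rewrite !mxE mul1r.
  by rewrite sumb hk mulr1.
have NtJ : N^T *m J = 11%:R *: J.
  apply/matrixP => i j; rewrite !mxE.
  under eq_bigr do rewrite !mxE mulr1.
  by rewrite sumb hk mulr1.
pose r p := #|[set b | inc p b]|.
have G : forall p q, (N *m N^T) p q = (if p == q then r p else 2)%:R.
  move=> p q; rewrite !mxE.
  under eq_bigr do rewrite !mxE -natrM mulnb.
  rewrite sumb; case: eqP => [<-|/eqP pq]; last by rewrite hl.
  by rewrite /r; congr (_%:R); apply: eq_card => b; rewrite !inE andbb.
have R11 : forall p, r p = 11%N.
  move=> p.
  have L : \sum_k (N *m N^T) p k = (r p + 110)%:R.
    rewrite (bigD1 p) //= G eqxx.
    under eq_bigr => k hkp do rewrite G eq_sym (negbTE hkp).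
    by rewrite -natr_sum natrD; congr (_ + _%:R); rewrite sum_nat_const cardC1 card_ord.

  have : ((N *m N^T) *m J) p p = (N *m (N^T *m J)) p p by rewrite mulmxA.
  rewrite NtJ -scalemxAr !mxE => E.
  have HJ : forall i j, J i j = 1 by move=> i j; rewrite mxE.
  have S1 : \sum_j (N *m N^T) p j * J j p = \sum_j (N *m N^T) p j.
    by apply: eq_bigr => j _; rewrite HJ mulr1.
  have S2 : \sum_j N p j * J j p = (r p)%:R.
    by rewrite /r -sumb; apply: eq_bigr => j _; rewrite HJ mulr1 mxE.
  rewrite S1 S2 L -natrM in E. move/eqP: E; rewrite eqr_nat => /eqP. lia.
have NNt : N *m N^T = 9%:M + 2%:R *: J.
  apply/matrixP => p q; rewrite G R11 !mxE; case: eqP => _ /=; rewrite ?mulr1n ?mulr0n; ring.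
have JJ : J *m J = 56%:R *: J.
  apply/matrixP => i j; rewrite !mxE.
  under eq_bigr do rewrite !mxE mulr1.
  by rewrite sumr_const card_ord mulr1.
pose Mi : 'M[rat]_56 := 9^-1 *: 1%:M - (2/1089) *: J.
have MMi : (N *m N^T) *m Mi = 1%:M.
  rewrite NNt /Mi mulmxDl mul_scalar_mx -scalemxAl mulmxBr -!scalemxAr mulmx1 JJ.
  apply/matrixP => i j; rewrite !mxE; case: eqP => _ /=; rewrite ?mulr1n ?mulr0n; field; done.
have MiN : (N^T *m Mi) *m N = 1%:M by apply: mulmx1C; rewrite mulmxA.
rewrite /Mi mulmxBr -!scalemxAr mulmx1 mulmxBl -!scalemxAl NtJ -scalemxAl JN in MiN.
set X := N^T *m N in MiN.
have XE : X e f = #|[set p | inc p e & inc p f]|%:R.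
  rewrite /X mxE -sumb; apply: eq_bigr => p _.
  by rewrite !mxE -natrM mulnb.
clearbody X.
have H := f_equal (fun M : 'M[rat]_56 => M e f) MiN.
rewrite /= !mxE (negbTE ef) /= in H.
have K : X e f = 9 * (9^-1 * X e f - 2 / 1089 * (11 * (11 * 1))) + 2 by field.
rewrite H in K.
have : (#|[set p | inc p e & inc p f]|%:R : rat) = 2%:R.
  rewrite -XE K; rewrite mulr0n; ring.
by move/eqP; rewrite eqr_nat => /eqP.
Qed.

Lemma F3_2x (x : 'F_3) : x + x = 0 -> x = 0.
Proof.
move=> H.
have h4 : (4%:R : 'F_3) = 1 by apply/val_inj; vm_compute.
by rewrite -[x]mul1r -h4 (_ : 4 = 2 + 2)%N // natrD mulrDl mulr_natl mulr2n H addr0.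
Qed.

Theorem lemma2 (inc : 'I_56 -> 'I_56 -> bool)
  (hD : symmetric_design 11 2 inc)
  (hB : forall p : 'I_56, inc p ord_max = (45 <= (p : nat))%N)
  (c : 'rV['F_3]_55)
  (h01 : forall j, c 0 j = 0 \/ c 0 j = 1)
  (hw : hweight c = 12%N)
  (hc : in_dual_code
          (\matrix_(i < 45, j < 55)
             incmx inc (widen_ord (isT : (45 <= 56)%N) i)
                       (widen_ord (isT : (55 <= 56)%N) j)) c) :
  in_dual_code (incmx inc) (row_mx c (0 : 'rV['F_3]_1)).
Proof.
set W := widen_ord (isT : (55 <= 56)%N).
set W45 := widen_ord (isT : (45 <= 56)%N).
have hk := hD.1; have hl := hD.2.
pose s (p : 'I_56) := \sum_(f < 55) (inc p (W f))%:R * c 0 f.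
have S1 : forall p : 'I_56, (p < 45)%N -> s p = 0.
  move=> p hp.
  have -> : p = W45 (Ordinal hp) by apply: val_inj.
  have := hc _ (row_sub (Ordinal hp) _).
  move/(f_equal (fun M : 'M['F_3]_1 => M 0 0)); rewrite !mxE => <-.
  by apply: eq_bigr => f _; rewrite !mxE.
have Sc : \sum_(f < 55) c 0 f = 0.
  have -> : \sum_(f < 55) c 0 f = \sum_(f < 55) ((c 0 f != 0)%:R : 'F_3).
    by apply: eq_bigr => f _; case: (h01 f) => ->.
  by rewrite sumb; move: hw; rewrite /hweight => ->; apply/val_inj; vm_compute.
have D3 : forall e f : 'I_56, \sum_p ((inc p e)%:R * (inc p f)%:R : 'F_3) = 2.
  move=> e f; under eq_bigr do rewrite -natrM mulnb.
  rewrite sumb; case: (eqVneq e f) => [->|ef].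
    rewrite (_ : [set x | inc x f & inc x f] = [set x | inc x f]); last first.
      by apply/setP => x; rewrite !inE andbb.
    by rewrite hk; apply/val_inj; vm_compute.
  by rewrite (@dual inc hD _ _ ef).
have Pair : forall q q' : 'I_56, (45 <= q)%N -> (45 <= q')%N -> q != q' -> s q + s q' = 0.
  move=> q q' hq hq' qq.
  set Sb := [set b | inc q b & inc q' b].
  have mS : ord_max \in Sb by rewrite inE !hB hq hq'.
  have : (0 < #|Sb :\ ord_max|)%N.
    move: (hl q q' qq); rewrite -/Sb (cardsD1 ord_max Sb) mS /=; lia.
  rewrite card_gt0 => /set0Pn [e]; rewrite !inE => /and3P [em iqe iq'e].
  have eB : forall p : 'I_56, (45 <= p)%N -> inc p e = (p == q) || (p == q').
    move=> p hp.
    have Sd : [set q; q'] \subset [set p | inc p e & inc p ord_max].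
      by apply/subsetP => x; rewrite !inE => /orP [] /eqP ->; rewrite hB ?hq ?hq' ?iqe ?iq'e.
    have hc2 : (#|[set p | inc p e & inc p ord_max]| <= #|[set q; q']|)%N.
      by rewrite (@dual inc hD _ _ em) cards2 qq.
    have := eqEcard [set q; q'] [set p | inc p e & inc p ord_max].
    rewrite Sd hc2 => H; have E : [set q; q'] = [set p | inc p e & inc p ord_max].
      by apply/eqP; rewrite H.
    have := congr1 (fun A : {set 'I_56} => p \in A) E.
    by rewrite /= !inE hB hp andbT => ->.
  pose T := \sum_p (inc p e)%:R * s p.
  have T1 : T = s q + s q'.
    rewrite /T (eq_bigr (fun p => (if p == q then s q else 0) + (if p == q' then s q' else 0))).
      by rewrite big_split /= -!big_mkcond !big_pred1_eq.
    move=> p _; case: (leqP 45 p) => hp.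
      rewrite eB //; case: (eqVneq p q) => [->|pq] /=.
        by rewrite (negbTE qq) mul1r addr0.
      by case: (eqVneq p q') => [->|pq'] /=; rewrite ?mul1r ?add0r ?mul0r ?addr0.
    rewrite S1 // mulr0.
    have pq : p != q by apply/eqP => E; move: hp; rewrite E ltnNge hq.
    have pq' : p != q' by apply/eqP => E; move: hp; rewrite E ltnNge hq'.
    by rewrite (negbTE pq) (negbTE pq') addr0.
  have T0 : T = 0.
    rewrite /T /s.
    under eq_bigr do rewrite big_distrr.
    rewrite exchange_big /=.
    under eq_bigr => f _ do (under eq_bigr do rewrite mulrA; rewrite -big_distrl D3).
    by rewrite (eq_bigr (fun f => 2 * c 0 f)) // -big_distrr /= Sc mulr0.
  by rewrite -T1 T0.
have SB : forall q : 'I_56, (45 <= q)%N -> s q = 0.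
  pose a : 'I_56 := inord 45; pose b : 'I_56 := inord 46; pose d : 'I_56 := inord 47.
  have va : (a : nat) = 45%N by rewrite inordK.
  have vb : (b : nat) = 46%N by rewrite inordK.
  have vd : (d : nat) = 47%N by rewrite inordK.
  have ab : a != b by rewrite -val_eqE /= va vb.
  have ad : a != d by rewrite -val_eqE /= va vd.
  have bd : b != d by rewrite -val_eqE /= vb vd.
  have ha : (45 <= a)%N by rewrite va.
  have hb : (45 <= b)%N by rewrite vb.
  have hd : (45 <= d)%N by rewrite vd.
  have h1 := Pair a b ha hb ab.
  have h2 := Pair a d ha hd ad.
  have h3 := Pair b d hb hd bd.
  have sa : s a = 0.
    apply: F3_2x.
    have -> : s a + s a = (s a + s b) + (s a + s d) - (s b + s d) by ring.
    by rewrite h1 h2 h3 addr0 subr0.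
  move=> q hq; case: (eqVneq q a) => [->//|qa].
  by have := Pair q a hq ha qa; rewrite sa addr0.
have Sall : forall p, s p = 0.
  by move=> p; case: (leqP 45 p) => hp; [apply: SB | apply: S1].
move=> u /submxP [w ->]; rewrite -mulmxA.
suff -> : incmx inc *m (row_mx c 0)^T = 0 by rewrite mulmx0.
apply/matrixP => p k; rewrite (ord1 k) !mxE.
rewrite -[RHS](Sall p) /s.
rewrite [LHS]big_ord_recr /= [X in _ + X](_ : _ = 0) ?addr0; last first.
  rewrite !mxE; case: splitP => j hj; last by rewrite mxE mulr0.
  by exfalso; move: (ltn_ord j); rewrite -hj.
apply: eq_bigr => f _.
have E1 : widen_ord (leqnSn 55) f = lshift 1 f by apply: val_inj.
have E2 : W f = lshift 1 f by apply: val_inj.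
rewrite E1 E2 /incmx [(row_mx c 0)^T _ _]mxE row_mxEl mxE.
by [].
Qed.
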